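(* Let $R$ be a unique factorization domain of finite character and of Krull dimension $2$. Then every prime ideal of $R$ is radically perfect.
   Context: All rings are commutative with identity. A ring $R$ is of finite character if every nonzero element of $R$ is contained in only finitely many maximal ideals. An ideal $I$ of $R$ is called radically perfect if $\mathrm{ht}(I)=\inf\{n \mid \sqrt{I}=\sqrt{(\theta_1,\dots,\theta_n)} \text{ for some } \theta_1,\dots,\theta_n\in R\}$, and moreover, if $\mathrm{ht}(I)=0$, then $\sqrt{I}=\sqrt{(\theta)}$ for some zero divisor $\theta$ of $R$. *)

(* Defs.v *)
From mathcomp Require Import all_boot all_order all_algebra.
Set Implicit Arguments. Unset Strict Implicit. Unset Printing Implicit Defensive.
Import GRing.Theory.
Local Open Scope ring_scope.

Section IdealTheory.
Variable R : comUnitRingType.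

Definition subI (I J : R -> Prop) : Prop := forall x, I x -> J x.
Definition eqI (I J : R -> Prop) : Prop := forall x, I x <-> J x.
Definition ssubI (I J : R -> Prop) : Prop := subI I J /\ exists x, J x /\ ~ I x.

Definition is_ideal (I : R -> Prop) : Prop :=
  [/\ I 0, (forall x y, I x -> I y -> I (x + y)) & (forall r x, I x -> I (r * x))].

Definition is_prime_ideal (I : R -> Prop) : Prop :=
  [/\ is_ideal I, ~ I 1 & (forall a b, I (a * b) -> I a \/ I b)].

Definition is_maximal_ideal (I : R -> Prop) : Prop :=
  [/\ is_ideal I, ~ I 1 &
      (forall J, is_ideal J -> subI I J -> eqI J I \/ J 1)].

Definition radical (I : R -> Prop) : R -> Prop := fun x => exists n : nat, I (x ^+ n).

Definition gen_ideal (th : seq R) : R -> Prop :=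
  fun x => exists c : 'I_(size th) -> R, x = \sum_(i < size th) c i * th`_i.

Definition zero_divisor (t : R) : Prop := exists b : R, b != 0 /\ t * b = 0.

Definition prime_chain_to (n : nat) (P : R -> Prop) : Prop :=
  exists C : nat -> (R -> Prop),
    [/\ (forall i, (i <= n)%N -> is_prime_ideal (C i)),
        (forall i, (i < n)%N -> ssubI (C i) (C i.+1)) & eqI (C n) P].

Definition prime_height_eq (P : R -> Prop) (n : nat) : Prop :=
  prime_chain_to n P /\ ~ prime_chain_to n.+1 P.

Definition height_eq (I : R -> Prop) (n : nat) : Prop :=
  (exists P, [/\ is_prime_ideal P, subI I P & prime_height_eq P n]) /\
  (forall P, is_prime_ideal P -> subI I P -> forall m, prime_height_eq P m -> (n <= m)%N).

Definition krull_dim_eq (n : nat) : Prop :=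
  (exists P, prime_chain_to n P) /\ ~ (exists P, prime_chain_to n.+1 P).

Definition rad_gen_number_eq (I : R -> Prop) (n : nat) : Prop :=
  (exists th : seq R, size th = n /\ eqI (radical I) (radical (gen_ideal th))) /\
  (forall th : seq R, eqI (radical I) (radical (gen_ideal th)) -> (n <= size th)%N).

Definition radically_perfect (I : R -> Prop) : Prop :=
  exists n : nat, [/\ height_eq I n, rad_gen_number_eq I n &
    (n = 0%N -> exists t : R, zero_divisor t /\ eqI (radical I) (radical (gen_ideal [:: t])))].

Definition finite_character : Prop :=
  forall x : R, x != 0 -> exists (k : nat) (L : 'I_k -> (R -> Prop)),
    forall M, is_maximal_ideal M -> M x -> exists i : 'I_k, eqI M (L i).

End IdealTheory.

Section UFD.
Variable R : idomainType.

Definition irreducible_elt (a : R) : Prop :=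
  [/\ a != 0, a \isn't a GRing.unit &
      forall b c : R, a = b * c -> b \is a GRing.unit \/ c \is a GRing.unit].

Definition associated (a b : R) : Prop := exists2 u : R, u \is a GRing.unit & a = u * b.

Definition irr_factorization (a : R) (s : seq R) : Prop :=
  (forall i, (i < size s)%N -> irreducible_elt s`_i) /\ a = \prod_(x <- s) x.

Definition is_UFD : Prop :=
  forall a : R, a != 0 -> a \isn't a GRing.unit ->
    (exists s : seq R, irr_factorization a s) /\
    (forall s t : seq R, irr_factorization a s -> irr_factorization a t ->
       size s = size t /\
       exists f : 'I_(size s) -> 'I_(size t),
         injective f /\ forall i : 'I_(size s), associated s`_i t`_(f i)).

End UFD.

(* Main.v *)
Require Import Defs.
From mathcomp Require Import all_boot all_order all_algebra.
From mathcomp Require Import boolp classical_sets ring.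
Set Implicit Arguments. Unset Strict Implicit. Unset Printing Implicit Defensive.
Import GRing.Theory.
Local Open Scope ring_scope.

Section Basics.
Variable R : idomainType.
Implicit Types (I J Q : R -> Prop) (x y a b : R).

Lemma I_Mr I x r : is_ideal I -> I x -> I (x * r).
Proof. by case=> _ _ hM Ix; rewrite mulrC; apply: hM. Qed.

Lemma I_N I x : is_ideal I -> I x -> I (- x).
Proof. by case=> _ _ hM Ix; rewrite -mulN1r; apply: hM. Qed.

Lemma I_B I x y : is_ideal I -> I x -> I y -> I (x - y).
Proof. move=> hI Ix Iy; case: (hI) => _ hD _; apply: hD => //; exact: I_N. Qed.

Lemma I_1 I x : is_ideal I -> I 1 -> I x.
Proof. by case=> _ _ hM I1; rewrite -(mulr1 x); apply: hM. Qed.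

Lemma I_unit I u : is_ideal I -> I u -> u \is a GRing.unit -> I 1.
Proof. by case=> _ _ hM Iu uU; rewrite -(mulVr uU); apply: hM. Qed.

Lemma prime_pow I x n : is_prime_ideal I -> I (x ^+ n) -> I x.
Proof.
case=> hI n1 hP; elim: n => [|n IH]; first by rewrite expr0 => /n1.
by rewrite exprS => /hP [] // /IH.
Qed.

Lemma prime_eqI I J : is_prime_ideal I -> eqI I J -> is_prime_ideal J.
Proof.
move=> [[h0 hD hM] h1 hP] E; split; first split.
- by apply/E.
- by move=> x y /E hx /E hy; apply/E; apply: hD.
- by move=> r x /E hx; apply/E; apply: hM.
- by move/E.
- by move=> a b /E /hP [] h; [left|right]; apply/E.
Qed.

Definition dvdr (p x : R) : Prop := exists d, x = d * p.

Definition prime_elt (p : R) : Prop :=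
  [/\ p != 0, p \isn't a GRing.unit & forall b c, dvdr p (b * c) -> dvdr p b \/ dvdr p c].

Lemma dvdr_ideal p : is_ideal (dvdr p).
Proof.
split.
- by exists 0; rewrite mul0r.
- by move=> x y [d ->] [e ->]; exists (d + e); rewrite mulrDl.
- by move=> r x [d ->]; exists (r * d); rewrite mulrA.
Qed.

Lemma dvdr_prime p : prime_elt p -> is_prime_ideal (dvdr p).
Proof.
case=> p0 pU hP; split => //; first exact: dvdr_ideal.
by case=> d /esym h; move/negP: pU; apply; apply/unitrPr; exists d; rewrite mulrC.
Qed.

Definition zeroI : R -> Prop := fun x => x = 0.

Lemma zeroI_prime : is_prime_ideal zeroI.
Proof.
split; first split.
- by [].
- by move=> x y -> ->; rewrite addr0.
- by move=> r x ->; rewrite mulr0.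
- by move=> h; move: (oner_neq0 R); rewrite h eqxx.
- by move=> a b /eqP; rewrite mulf_eq0 => /orP [] /eqP; [left|right].
Qed.

Lemma gen_nil x : gen_ideal [::] x <-> x = 0.
Proof.
split; first by case=> c ->; rewrite big_ord0.
by move=> ->; exists (fun _ => 0); rewrite big_ord0.
Qed.

Lemma gen_one t x : gen_ideal [:: t] x <-> dvdr t x.
Proof.
split; first by case=> c ->; rewrite big_ord1; exists (c ord0).
by case=> d ->; exists (fun _ => d); rewrite big_ord1.
Qed.

Lemma gen_two a b x : gen_ideal [:: a; b] x <-> exists r s, x = r * a + s * b.
Proof.
split; first by case=> c ->; rewrite big_ord_recl big_ord1; exists (c ord0), (c (lift ord0 ord0)).
case=> r [s ->]; exists (fun i : 'I_2 => if val i == 0%N then r else s).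
by rewrite big_ord_recl big_ord1.
Qed.

Lemma rad_zero x : radical (gen_ideal [::]) x <-> x = 0.
Proof.
split; last by move=> ->; exists 1%N; apply/gen_nil; rewrite expr1.
by case=> n /gen_nil /eqP; rewrite expf_eq0 => /andP [_ /eqP].
Qed.

Lemma rad_prime I x : is_prime_ideal I -> radical I x <-> I x.
Proof. by move=> hI; split; [case=> n; apply: prime_pow | exists 1%N; rewrite expr1]. Qed.

End Basics.


Section Z.
Variable R : idomainType.
Implicit Types (I J Q : R -> Prop) (x y a b : R).

Definition goodI J x (A : R -> Prop) :=
  [/\ is_ideal A, subI J A & forall n, ~ A (x ^+ n)].

Lemma zorn_ideal J x : is_ideal J -> (forall n, ~ J (x ^+ n)) ->
  exists Q, goodI J x Q /\
    forall Q', goodI J x Q' -> subI Q Q' -> subI Q' Q.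
Proof.
move=> hJ nJ.
have := @Zorn_bigcup R (fun A => forall y, A y -> goodI J x A).
case.
- move=> F FP Ftot y [X FX Xy].
  have [hX JX nX] := FP X FX y Xy.
  have good_of : forall Z z, F Z -> Z z -> goodI J x Z.
    by move=> Z z FZ Zz; apply: (FP Z FZ z Zz).
  split; first split.
  + by exists X => //; case: hX.
  + move=> u v [X1 F1 u1] [X2 F2 v2].
    have [S12|S21] := Ftot X1 X2 F1 F2.
    * exists X2 => //; have [[_ hD _] _ _] := good_of X2 v F2 v2.
      by apply: hD => //; apply: S12.
    * exists X1 => //; have [[_ hD _] _ _] := good_of X1 u F1 u1.
      by apply: hD => //; apply: S21.
  + move=> r u [X1 F1 u1]; exists X1 => //.
    by have [[_ _ hM] _ _] := good_of X1 u F1 u1; apply: hM.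
  + by move=> z Jz; exists X => //; apply: JX.
  + by move=> n [Z FZ Zn]; have [_ _ nZ] := good_of Z _ FZ Zn; apply: (nZ n).
- move=> A [PA Amax].
  have [[y Ay]|nA] := pselect (exists y, A y); last first.
    exfalso; apply: (Amax J); last by move=> y Jy; split.
    split; first by move=> z Az; exfalso; apply: nA; exists z.
    by move=> h; apply: nA; exists 0; apply: h; case: hJ.
  have gA := PA y Ay; exists A; split => // Q' gQ' AQ' z Q'z.
  apply: contrapT => nAz; apply: (Amax Q'); last by move=> w _; apply: gQ'.
  by split => // h; apply: nAz; apply: h.
Qed.

Lemma zorn_prime J x Q : goodI J x Q ->
  (forall Q', goodI J x Q' -> subI Q Q' -> subI Q' Q) -> is_prime_ideal Q.
Proof.
move=> [hQ JQ nQ] Qmax.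
have [h0 hD hM] := hQ.
split => //; first by move=> h; apply: (nQ 0%N); rewrite expr0.
move=> a b Qab; apply: contrapT => /not_orP [na nb].
pose Qa := fun y => exists q r, Q q /\ y = q + r * a.
pose Qb := fun y => exists q r, Q q /\ y = q + r * b.
have iQ c : is_ideal (fun y => exists q r, Q q /\ y = q + r * c).
  split.
  - by exists 0, 0; rewrite mul0r addr0.
  - move=> u v [q [r [Qq ->]]] [q' [r' [Qq' ->]]]; exists (q + q'), (r + r').
    by split; [apply: hD | rewrite mulrDl addrACA].
  - move=> s u [q [r [Qq ->]]]; exists (s * q), (s * r).
    by split; [apply: hM | rewrite mulrDr mulrA].
have sQ c : subI Q (fun y => exists q r, Q q /\ y = q + r * c).
  by move=> u Qu; exists u, 0; rewrite mul0r addr0.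
have inc c : (fun y => exists q r, Q q /\ y = q + r * c) c.
  by exists 0, 1; rewrite mul1r add0r.
have pw c : ~ Q c -> exists n q r, Q q /\ x ^+ n = q + r * c.
  move=> nc; apply: contrapT => hn; apply: nc.
  apply: (Qmax _ _ (sQ c)) (inc c); split; first exact: iQ.
  - by move=> u Ju; apply: sQ; apply: JQ.
  - by move=> n [q [r [Qq e]]]; apply: hn; exists n, q, r.
have [n [q [r [Qq e1]]]] := pw a na.
have [m [q' [r' [Qq' e2]]]] := pw b nb.
apply: (nQ (n + m)%N); rewrite exprD e1 e2.
have -> : (q + r * a) * (q' + r' * b) = q * (q' + r' * b) + (r * r') * (a * b) + q' * (r * a).
  by ring.
apply: (hD); first apply: (hD).
- exact: (I_Mr _ hQ Qq).
- exact: hM.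
- exact: (I_Mr _ hQ Qq').
Qed.

End Z.


Section U.
Variable R : idomainType.
Implicit Types (I J Q : R -> Prop) (x y a b c d p q r u z t : R).

Lemma prod_dvd (s : seq R) i : (i < size s)%N -> dvdr s`_i (\prod_(z <- s) z).
Proof.
elim: s i => [|z s IH] [|i] //= hi; rewrite big_cons.
  by exists (\prod_(y <- s) y); rewrite mulrC.
by have [r ->] := IH i hi; exists (z * r); rewrite mulrA.
Qed.

Lemma irr_assoc u a : u \is a GRing.unit -> irreducible_elt a -> irreducible_elt (u * a).
Proof.
move=> uU [a0 aU ha]; split.
- by rewrite mulf_neq0 //; apply: contraTneq uU => ->; rewrite unitr0.
- by rewrite unitrMr.
- move=> b c e; have : a = (u^-1 * b) * c by rewrite -mulrA -e mulKr.
  by move/ha => [h|h]; [left; move: h; rewrite unitrMr // unitrV|right].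
Qed.

Lemma fact_nonempty a s : a \isn't a GRing.unit -> irr_factorization a s -> (0 < size s)%N.
Proof. by case: s => //= aU [_ e]; move: aU; rewrite e big_nil unitr1. Qed.

Lemma fact_cat b c sb sc : irr_factorization b sb -> irr_factorization c sc ->
  irr_factorization (b * c) (sb ++ sc).
Proof.
move=> [hb eb] [hc ec]; split; last by rewrite big_cat eb ec.
move=> i; rewrite size_cat nth_cat; case: ifP => hi hs; first exact: hb.
by apply: hc; rewrite ltn_subLR // leqNgt hi.
Qed.

Lemma prime_prod I (s : seq R) : is_prime_ideal I -> I (\prod_(z <- s) z) ->
  exists2 i, (i < size s)%N & I s`_i.
Proof.
move=> hI; elim: s => [|z s IH]; first by rewrite big_nil; case: hI => _ h _ /h.
rewrite big_cons; case: (hI) => _ _ hP /hP [h|/IH [i hi hs]]; first by exists 0%N.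
by exists i.+1.
Qed.

Hypothesis ufd : is_UFD R.

Lemma irr_prime q : irreducible_elt q -> prime_elt q.
Proof.
move=> hq; have [q0 qU qi] := hq; split => // b c [d e].
have [->|b0] := eqVneq b 0; first by left; exists 0; rewrite mul0r.
have [->|c0] := eqVneq c 0; first by right; exists 0; rewrite mul0r.
have [bU|bN] := boolP (b \is a GRing.unit).
  by right; exists (b^-1 * d); rewrite -mulrA -e mulKr.
have [cU|cN] := boolP (c \is a GRing.unit).
  by left; exists (c^-1 * d); rewrite -mulrA -e (mulrC b c) mulKr.
have [[sb fb] _] := ufd b0 bN.
have [[sc fc] _] := ufd c0 cN.
have bc0 : b * c != 0 by rewrite mulf_neq0.
have bcN : b * c \isn't a GRing.unit by rewrite unitrM negb_and bN.
have fbc := fact_cat fb fc.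
have [_ uniq] := ufd bc0 bcN.
have d0 : d != 0 by apply: contraNneq bc0 => d0; rewrite e d0 mul0r.
have [dU|dN] := boolP (d \is a GRing.unit).
  have f1 : irr_factorization (b * c) [:: d * q].
    split; last by rewrite big_seq1.
    by case=> // _; apply: irr_assoc.
  have [hs _] := uniq _ _ fbc f1.
  move: hs; rewrite size_cat /=.
  move: (fact_nonempty bN fb) (fact_nonempty cN fc); case: (size sb) => // n _; case: (size sc) => // m _; by rewrite addSn addnS; case.
have [[sd fd] _] := ufd d0 dN.
have fq : irr_factorization (b * c) (q :: sd).
  case: fd => hd ed; split; last by rewrite big_cons -ed e mulrC.
  by case=> //= i; apply: hd.
have [_ [f [_ hf]]] := uniq _ _ fq fbc.
have := hf (Ordinal (isT : (0 < size (q :: sd))%N)).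
set j := f _; case: j => j hj /= [u uU eq].
move: hj eq; rewrite size_cat nth_cat; case: ifP => hj1 hj2 eq.
  left; have [r er] := prod_dvd hj1; case: fb => _ eb.
  exists (r * u^-1); rewrite eb er eq -mulrA; congr (_ * _).
  by rewrite mulrA mulVr ?mul1r.
right; have hj3 : (j - size sb < size sc)%N by rewrite ltn_subLR // leqNgt hj1.
have [r er] := prod_dvd hj3; case: fc => _ ec.
exists (r * u^-1); rewrite ec er eq -mulrA; congr (_ * _).
by rewrite mulrA mulVr ?mul1r.
Qed.

Lemma prime_has_irr I z : is_prime_ideal I -> I z -> z != 0 ->
  exists q, [/\ I q, irreducible_elt q & prime_elt q].
Proof.
move=> hI Iz z0.
have zN : z \isn't a GRing.unit.
  by apply/negP => zU; case: (hI) => hi n1 _; apply: n1; apply: I_unit hi Iz zU.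
have [[s [hs es]] _] := ufd z0 zN.
rewrite es in Iz; have [i hi Ii] := prime_prod hI Iz.
have hi2 := hs i hi; by exists s`_i; split => //; apply: irr_prime.
Qed.

Lemma prime_in_principal I p z : is_prime_ideal I -> I z -> z != 0 -> prime_elt p ->
  subI I (dvdr p) -> subI (dvdr p) I.
Proof.
move=> hI Iz z0 [p0 pU _] sub.
have [r [Ir [r0 rU rh] _]] := prime_has_irr hI Iz z0.
have [d ed] := sub r Ir.
have dU : d \is a GRing.unit.
  by case: (rh _ _ ed) => // h; move/negP: pU.
have Ip : I p.
  case: (hI) => [[_ _ hM] _ _]; have := hM d^-1 _ Ir.
  by rewrite ed mulrA mulVr ?mul1r.
by move=> x [e ->]; case: (hI) => [[_ _ hM] _ _]; apply: hM.
Qed.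

End U.


Section Av.
Variable R : idomainType.
Implicit Types (I J Q : R -> Prop) (x y a b c d p q r u z t : R).

Lemma not_subI I J : ~ subI I J -> exists y, I y /\ ~ J y.
Proof.
move=> h; apply: contrapT => h2; apply: h => y Iy; apply: contrapT => nJ.
by apply: h2; exists y.
Qed.

Lemma avoid I (Qf : nat -> R -> Prop) n (s : seq nat) : (size s <= n)%N -> is_ideal I ->
  (forall i, i \in s -> is_prime_ideal (Qf i) /\ ~ subI I (Qf i)) ->
  exists b, I b /\ forall i, i \in s -> ~ Qf i b.
Proof.
elim: n s => [|n IH] s.
  by case: s => // _ hI _; exists 0; split => //; case: hI.
case: s => [|i0 s'] hs hI hQ; first by exists 0; split => //; case: hI.
set s := i0 :: s'.
set t := filter (predC1 i0) s'.
case Et : t => [|j0 t'].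
  have [_ /not_subI [y [Iy ny]]] := hQ i0 (mem_head _ _).
  exists y; split => // i; rewrite inE => /orP [/eqP -> //|is'].
  have [/eqP ->//|ne] := boolP (i == i0).
  have : i \in t by rewrite mem_filter /= ne is'.
  by rewrite Et.
have hf : forall i, exists b, i \in s -> I b /\ forall j, j \in s -> j != i -> ~ Qf j b.
  move=> i; have [is_|nis] := boolP (i \in s); last by exists 0.
  have hsz : (size (filter (predC1 i) s) <= n)%N.
    rewrite size_filter -ltnS; apply: leq_trans hs.
    rewrite -(count_predC (predC1 i) s) -addn1 leq_add2l.
    by rewrite -has_count; apply/hasP; exists i => //=; rewrite negbK.
  have [|b [Ib hb]] := IH _ hsz hI.
    by move=> j; rewrite mem_filter => /andP [_ /hQ].
  exists b => _; split => // j js nj; apply: hb; rewrite mem_filter /= nj js.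
  by [].
have [f hfp] := choice hf.
have [[i [is_ ni]]|hall] := pselect (exists i, i \in s /\ ~ Qf i (f i)).
  exists (f i); have [If hfi] := hfp i is_; split => // j js.
  by have [/eqP -> //|nj] := boolP (j == i); apply: hfi.
have Qall : forall i, i \in s -> Qf i (f i).
  by move=> i is_; apply: contrapT => ni; apply: hall; exists i.
have i0s : i0 \in s by apply: mem_head.
have ts : forall j, j \in t -> j \in s /\ j != i0.
  by move=> j; rewrite mem_filter => /andP [/= nj js]; split => //; rewrite inE js orbT.
have [Ifi0 hfi0] := hfp i0 i0s.
exists (f i0 + \prod_(j <- t) f j); split.
  case: (hI) => _ hD _; apply: hD => //.
  rewrite Et big_cons; apply: I_Mr => //.
  have j0t : j0 \in t by rewrite Et mem_head.
  have [j0s _] := ts j0 j0t.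
  by have [] := hfp j0 j0s.
move=> j js hx.
have [/eqP ej|nj] := boolP (j == i0).
  rewrite {}ej in js hx *.
  have hp : Qf i0 (\prod_(z <- map f t) z).
    rewrite big_map; have [hi _] := hQ i0 js.
    have -> : \prod_(j <- t) f j = f i0 + \prod_(j <- t) f j - f i0 by rewrite [f i0 + _]addrC addrK.
    by case: hi => hi _ _; apply: I_B => //; apply: Qall.
  have [hi _] := hQ i0 js.
  have [k hk hk2] := prime_prod hi hp.
  rewrite size_map in hk; rewrite (nth_map 0%N) // in hk2.
  have [ks kn] := ts _ (mem_nth 0%N hk).
  have [_ hfk] := hfp _ ks.
  by apply: (hfk i0 js) => //; rewrite eq_sym.
have jt : j \in t by rewrite mem_filter /= nj; move: js; rewrite inE (negbTE nj).
have [hj _] := hQ j js.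
have hp : Qf j (\prod_(z <- t) f z).
  have -> : \prod_(z <- t) f z = \prod_(z <- map f t) z by rewrite big_map.
  have hk : (index j t < size (map f t))%N by rewrite size_map index_mem.
  have [e ->] := prod_dvd hk.
  rewrite (nth_map 0%N) ?nth_index ?index_mem //.
  by case: hj => [[_ _ hM] _ _]; apply: hM; apply: Qall.
apply: (hfi0 j js nj).
have -> : f i0 = f i0 + \prod_(j <- t) f j - \prod_(j <- t) f j by rewrite addrK.
by case: hj => hj _ _; apply: I_B.
Qed.

End Av.


Section Main.
Variable R : idomainType.
Implicit Types (I J Q A B C D P : R -> Prop) (x y a b c d p q r u z t : R).

Lemma chain1 A B : is_prime_ideal A -> is_prime_ideal B -> ssubI A B -> prime_chain_to 1 B.
Proof.
move=> hA hB hAB; exists (fun i => nth B [:: A; B] i); split => //.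
- by case=> [|[|]].
- by case.
Qed.

Lemma chain2 A B C : is_prime_ideal A -> is_prime_ideal B -> is_prime_ideal C ->
  ssubI A B -> ssubI B C -> prime_chain_to 2 C.
Proof.
move=> hA hB hC hAB hBC; exists (fun i => nth C [:: A; B; C] i); split => //.
- by case=> [|[|[|]]].
- by case=> [|[|]].
Qed.

Lemma chain3 A B C D : is_prime_ideal A -> is_prime_ideal B -> is_prime_ideal C ->
  is_prime_ideal D -> ssubI A B -> ssubI B C -> ssubI C D -> prime_chain_to 3 D.
Proof.
move=> hA hB hC hD hAB hBC hCD; exists (fun i => nth D [:: A; B; C; D] i); split => //.
- by case=> [|[|[|[|]]]].
- by case=> [|[|[|]]].
Qed.

Lemma rad_eqI I J : eqI I J -> eqI (radical I) (radical J).
Proof. by move=> E x; split; case=> n h; exists n; apply/E. Qed.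

Lemma gen_zero x : gen_ideal [:: 0] x <-> x = 0.
Proof. by rewrite gen_one; split; [case=> d ->; rewrite mulr0 | move=> ->; exists 0; rewrite mul0r]. Qed.

Lemma rad_gen_zero x : radical (gen_ideal [:: 0]) x <-> x = 0.
Proof.
rewrite -rad_zero; apply: rad_eqI => y; rewrite gen_zero gen_nil; done.
Qed.

Lemma ss_zero_q q : q != 0 -> ssubI (@zeroI R) (dvdr q).
Proof.
move=> q0; split; first by move=> x ->; exists 0; rewrite mul0r.
by exists q; split; [exists 1; rewrite mul1r | move=> /eqP; rewrite (negbTE q0)].
Qed.

Lemma ss_zero_P I q : is_ideal I -> I q -> q != 0 -> ssubI (@zeroI R) I.
Proof.
move=> hI Iq q0; split; first by move=> x ->; case: hI.
by exists q; split => // /eqP; rewrite (negbTE q0).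
Qed.

Lemma gen_two_ideal a b : is_ideal (gen_ideal [:: a; b]).
Proof.
split.
- by apply/gen_two; exists 0, 0; rewrite !mul0r addr0.
- move=> x y /gen_two [r [s ->]] /gen_two [r' [s' ->]]; apply/gen_two.
  by exists (r + r'), (s + s'); ring.
- move=> w x /gen_two [r [s ->]]; apply/gen_two.
  by exists (w * r), (w * s); ring.
Qed.

Hypothesis ufd : is_UFD R.
Hypothesis fc : finite_character R.
Hypothesis dim : krull_dim_eq R 2.

Lemma height2_case P q y : is_prime_ideal P -> P q -> irreducible_elt q ->
  prime_elt q -> P y -> ~ dvdr q y -> radically_perfect P.
Proof.
move=> hP Pq qirr qpr Py nqy.
have [_ nodim] := dim.
have [q0 qU _] := qpr.
have hPi : is_ideal P by case: hP.
have qsubP : subI (dvdr q) P by move=> x [d ->]; case: hPi => _ _ hM; apply: hM.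
have ssqP : ssubI (dvdr q) P by split => //; exists y.
have ch2 := chain2 (@zeroI_prime R) (dvdr_prime qpr) hP (ss_zero_q q0) ssqP.
have radP x : radical P x <-> P x by apply: rad_prime.
exists 2%N; split => //.
- split.
    exists P; split => //; split => // h; apply: nodim; by exists P.
  move=> Q hQ PQ [|[|m]] [_ nc] //; exfalso; apply: nc.
  + apply: (chain1 (@zeroI_prime R) hQ); apply: (ss_zero_P _ (PQ _ Pq)) => //; by case: hQ.
  + apply: (chain2 (@zeroI_prime R) (dvdr_prime qpr) hQ (ss_zero_q q0)).
    by split; [move=> x /qsubP /PQ | exists y; split => //; apply: PQ].
- split.
  +
    have [k [L hL]] := fc q0.
    pose good (j : 'I_k) := is_prime_ideal (L j) /\ ~ subI P (L j).
    pose Qf := fun i : nat => match @insub _ _ 'I_k i with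
               | Some j => if pselect (good j) then L j else dvdr q
               | None => dvdr q end.
    have hQf : forall i, i \in k :: iota 0 k ->
        is_prime_ideal (Qf i) /\ ~ subI P (Qf i).
      move=> i _; rewrite /Qf; case: insub => [j|].
        destruct (pselect (good j)) as [gj|ngj]; first exact: gj.
        by split; [apply: dvdr_prime | move=> h; apply: nqy; apply: h].
      by split; [apply: dvdr_prime | move=> h; apply: nqy; apply: h].
    have [b [Pb hb]] := avoid (leqnn _) hPi hQf.
    have nqb : ~ dvdr q b.
      by have := hb k (mem_head _ _); rewrite /Qf insubN // ltnn.
    have hbL : forall j : 'I_k, good j -> ~ L j b.
      move=> j gj; have := hb (val j); rewrite /Qf valK.
      destruct (pselect (good j)) as [gj2|ng]; last by []. apply; by rewrite inE mem_iota /= ltn_ord orbT.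
    exists [:: q; b]; split => // x; split; last first.
      by case=> n /gen_two [r [s e]]; apply/radP; apply: (prime_pow (n := n) hP);
         rewrite e; case: hPi => _ hD hM; apply: hD; apply: hM.
    move/radP => Px; apply: contrapT => nx.
    have nJ : forall n, ~ gen_ideal [:: q; b] (x ^+ n) by move=> n h; apply: nx; exists n.
    have [Q [gQ Qmax]] := zorn_ideal (gen_two_ideal q b) nJ.
    have hQ := zorn_prime gQ Qmax.
    have [hQi JQ nQ] := gQ.
    have Qq : Q q by apply: JQ; apply/gen_two; exists 1, 0; rewrite mul1r mul0r addr0.
    have Qb : Q b by apply: JQ; apply/gen_two; exists 0, 1; rewrite mul1r mul0r add0r.
    have n1 : forall n, ~ Q (1 ^+ n) by move=> n; rewrite expr1n => h; apply: (nQ 0%N); rewrite expr0.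
    have [M [gM Mmax]] := zorn_ideal hQi n1.
    have hM := zorn_prime gM Mmax.
    have [hMi QM nM] := gM.
    have maxM : is_maximal_ideal M.
      split => //; first by have := nM 1%N; rewrite expr1.
      move=> J' hJ' MJ'; have [J1|nJ1] := pselect (J' 1); first by right.
      left => w; split; last by apply: MJ'.
      apply: (Mmax J') => //; split => //; first by move=> v /QM /MJ'.
      by move=> n; rewrite expr1n.
    have [j Ej] := hL M maxM (QM _ Qq).
    have MQ : subI M Q.
      apply: contrapT => /not_subI [w [Mw nQw]]; apply: nodim; exists M.
      apply: (chain3 (@zeroI_prime R) (dvdr_prime qpr) hQ hM (ss_zero_q q0)).
      * by split; [move=> v [e ->]; case: hQi => _ _ hm; apply: hm | exists b].
      * by split => //; exists w.
    apply: (hbL j); last by apply/Ej; apply: QM.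
    split; first exact: prime_eqI hM Ej.
    move=> h; apply: (nQ 1%N); rewrite expr1; apply: MQ; apply/Ej; exact: h.
  +
    move=> [|t [|t' th]] E //.
    * have : radical P q by apply/radP.
      by move/E/rad_zero/eqP; rewrite (negbTE q0).
    * have Pt : P t by apply/radP/E; exists 1%N; rewrite expr1; apply/gen_one; exists 1; rewrite mul1r.
      have t0 : t != 0.
        apply/eqP => t0; rewrite t0 in E.
        have : radical P q by apply/radP.
        by move/E/rad_gen_zero/eqP; rewrite (negbTE q0).
      have tN : t \isn't a GRing.unit.
        by apply/negP => tU; case: hP => _ n1 _; apply: n1; apply: I_unit hPi Pt tU.
      have [[s fs] _] := ufd t0 tN.
      have s0 := fact_nonempty tN fs.
      case: fs => hs es.
      have pirr := hs 0%N s0.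
      have ppr := irr_prime ufd pirr.
      have [d ed] : dvdr s`_0 t by rewrite es; apply: prod_dvd.
      have Pp : subI P (dvdr s`_0).
        move=> w /radP /E [n /gen_one [e hw]].
        apply: (prime_pow (n := n) (dvdr_prime ppr)); rewrite hw ed.
        by exists (e * d); rewrite mulrA.
      have [f ef] := Pp q Pq.
      have [_ pU _] := ppr.
      have fU : f \is a GRing.unit by case: qirr => _ _ /(_ _ _ ef) [] // h; move/negP: pU.
      have [g eg] := Pp y Py.
      exfalso; apply: nqy; exists (g * f^-1); rewrite eg ef mulrA -(mulrA g) mulVr ?mulr1 //.
Qed.

End Main.


Theorem proposition4p1 (R : idomainType) :
  is_UFD R -> finite_character R -> krull_dim_eq R 2 ->
  forall P : R -> Prop, is_prime_ideal P -> radically_perfect P.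
Proof.
move=> ufd fc dim P hP.
have hPi : is_ideal P by case: hP.
have radP x : radical P x <-> P x by apply: rad_prime.
have [[z [Pz z0]]|nz] := pselect (exists z, P z /\ z != 0); last first.
  have P0 : forall x, P x -> x = 0.
    by move=> x Px; apply/eqP; apply: contrapT => h; apply: nz; exists x; split => //; apply/negP.
  exists 0%N; split.
  - split; last by [].
    exists P; split => //; split.
      by exists (fun _ => P); split.
    move=> [C [hC hS hE]]; have [_ [w [C1w nC0w]]] := hS 0%N isT.
    have w0 := P0 _ (proj1 (hE w) C1w); rewrite w0 in nC0w.
    by apply: nC0w; case: (hC 0%N isT) => [[]].
  - split; last by [].
    exists [::]; split => // x; rewrite radP rad_zero; split; first exact: P0.
    by move=> ->; case: hPi.
  - move=> _; exists 0; split; first by exists 1; rewrite oner_neq0 mul0r.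
    move=> x; rewrite radP rad_gen_zero; split; first exact: P0.
    by move=> ->; case: hPi.
have [q [Pq qirr qpr]] := prime_has_irr ufd hP Pz z0.
have [q0 qU _] := qpr.
have [sub|/not_subI [y [Py nqy]]] := pselect (subI P (dvdr q)); last first.
  exact: (height2_case ufd fc dim hP Pq qirr qpr Py nqy).
have sup := prime_in_principal ufd hP Pq q0 qpr sub.
have ssP : ssubI (@zeroI R) P by apply: (ss_zero_P hPi Pq q0).
exists 1%N; split.
- split.
    exists P; split => //; split; first exact: (chain1 (@zeroI_prime R) hP ssP).
    move=> [C [hC hS hE]].
    have [_ [w [C1w nC0w]]] := hS 0%N isT.
    have w0 : w != 0 by apply/eqP => w0; rewrite w0 in nC0w; apply: nC0w; case: (hC 0%N isT) => [[]].
    have C1P : subI (C 1%N) P by move=> v /(proj1 (hS 1%N isT)) /hE.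
    have := prime_in_principal ufd (hC 1%N isT) C1w w0 qpr (fun v h => sub v (C1P v h)).
    move=> sup1; have [_ [v [C2v nC1v]]] := hS 1%N isT.
    by apply: nC1v; apply: sup1; apply: sub; apply/hE.
  move=> Q hQ PQ [|m] [_ nc] //; exfalso; apply: nc.
  apply: (chain1 (@zeroI_prime R) hQ); apply: (ss_zero_P _ (PQ _ Pq)) => //; by case: hQ.
- split.
    exists [:: q]; split => // x; rewrite radP; split.
      by move/sub => h; exists 1%N; rewrite expr1; apply/gen_one.
    case=> n /gen_one h; apply: sup; exact: (prime_pow (n := n) (dvdr_prime qpr)).
  move=> [|t th] E //.
  have : radical P q by apply/radP.
  by move/E/rad_zero/eqP; rewrite (negbTE q0).
- by [].
Qed.
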